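(* Let $k\ge1$, $f\in P_k$ and $t\in[0,h(f)]$. For $1\le i\le k$, we have $t_i\neq0$ if and only if there exists $r\in\mathbb{R}$ such that $|\{j\in\{0,\dots,k\}:\phi_f(t)_j>r\}|=i$. Moreover, if $r\in\mathbb{R}$ satisfies $|\{j:\phi_f(t)_j>r\}|=i$ and $g:\{0,\dots,k\}\to\{0,\dots,k\}$ is defined by $g(j)=i$ if $\phi_f(t)_j\le r$ and $g(j)=0$ if $\phi_f(t)_j>r$, then $g\in P_k$, $h(g)=e_i$ and $g\le f$.
   Context: A $k$-placing is a function $f:\{0,\dots,k\}\to\{0,\dots,k\}$ with $f(j)=|\{i:f(i)<f(j)\}|$ for all $j$; $P_k$ is the set of $k$-placings with pointwise order. The height $h:P_k\to\mathbb{N}^k$ is $h(f)_i=1$ if $f^{-1}(i)\ne\emptyset$, else $0$ ($1\le i\le k$); $e_1,\dots,e_k$ are the generators of $\mathbb{N}^k$ and $[0,m]=\{t\in\mathbb{R}^k:0\le t\le m\}$. Let $\varepsilon_0,\dots,\varepsilon_k$ be the standard basis of $\mathbb{R}^{k+1}$, $v_0=\frac1{k+1}\sum_{i=0}^k\varepsilon_i$, and for $f\in P_k$, $n\in\operatorname{range}(f)\setminus\{0\}$, $v_{f,n}=\frac1n\sum_{j: f(j)<n}\varepsilon_j$. Define $\phi_f:[0,h(f)]\to\mathbb{R}^{k+1}$ by $\phi_f(0)=v_0$ and, for $t\ne0$, $\phi_f(t)=(1-\|t\|_\infty)v_0+\frac{\|t\|_\infty}{\|t\|_1}\sum_{n\in\operatorname{range}(f)\setminus\{0\}}t_nv_{f,n}$.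 *)

(* Defs.v *)
From HB Require Import structures.
From mathcomp Require Import all_boot all_order all_algebra.
Set Implicit Arguments. Unset Strict Implicit. Unset Printing Implicit Defensive.
Import Order.TTheory GRing.Theory Num.Theory.
Local Open Scope ring_scope.

Definition placing (k : nat) (f : 'I_k.+1 -> 'I_k.+1) : Prop :=
  forall j : 'I_k.+1, nat_of_ord (f j) = #|[set i : 'I_k.+1 | (f i < f j)%N]|.

Definition placing_le (k : nat) (g f : 'I_k.+1 -> 'I_k.+1) : Prop :=
  forall j : 'I_k.+1, (g j <= f j)%N.

Definition in_range (k : nat) (f : 'I_k.+1 -> 'I_k.+1) (n : nat) : bool :=
  [exists j : 'I_k.+1, nat_of_ord (f j) == n].

(* height h(f)_i, meaningful for 1 <= i <= k *)
Definition height (k : nat) (f : 'I_k.+1 -> 'I_k.+1) (i : nat) : nat :=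
  if in_range f i then 1%N else 0%N.

(* Vectors t in R^k are represented as t : nat -> R, only the
   coordinates t 1, ..., t k being relevant. *)
Definition in_box (R : realFieldType) (k : nat) (f : 'I_k.+1 -> 'I_k.+1)
  (t : nat -> R) : Prop :=
  forall i : nat, (1 <= i <= k)%N -> 0 <= t i <= (height f i)%:R.

Definition norm_inf (R : realFieldType) (k : nat) (t : nat -> R) : R :=
  \big[Num.max/0]_(1 <= i < k.+1) `|t i|.

Definition norm_1 (R : realFieldType) (k : nat) (t : nat -> R) : R :=
  \sum_(1 <= i < k.+1) `|t i|.

Definition is_zero_vec (R : realFieldType) (k : nat) (t : nat -> R) : bool :=
  all (fun i => t i == 0) (iota 1 k).

Definition v0 (R : realFieldType) (k : nat) (j : 'I_k.+1) : R :=
  1 / (k.+1)%:R.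

(* v_{f,n} = (1/n) sum_{j : f j < n} eps_j *)
Definition vfn (R : realFieldType) (k : nat) (f : 'I_k.+1 -> 'I_k.+1) (n : nat)
  (j : 'I_k.+1) : R :=
  if (f j < n)%N then 1 / n%:R else 0.

Definition phi (R : realFieldType) (k : nat) (f : 'I_k.+1 -> 'I_k.+1)
  (t : nat -> R) (j : 'I_k.+1) : R :=
  if is_zero_vec k t then @v0 R k j
  else (1 - norm_inf k t) * @v0 R k j
       + norm_inf k t / norm_1 k t
         * \sum_(1 <= n < k.+1 | in_range f n) t n * @vfn R k f n j.

(* Main.v *)
Require Import Defs.
From HB Require Import structures.
From mathcomp Require Import all_boot all_order all_algebra.
Import Order.TTheory GRing.Theory Num.Theory.
Set Implicit Arguments. Unset Strict Implicit.
Local Open Scope ring_scope.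

Lemma sum_ge_term (R : realFieldType) (r : seq nat) (F : nat -> R) x :
  x \in r -> (forall y, y \in r -> 0 <= F y) -> F x <= \sum_(y <- r) F y.
Proof.
elim: r => //= a r IH; rewrite in_cons big_cons => /orP[/eqP ->|xr] H.
  rewrite lerDl big_seq; apply: sumr_ge0 => y yr; apply: H.
  by rewrite in_cons yr orbT.
apply: le_trans (IH xr _) _.
  by move=> y yr; apply: H; rewrite in_cons yr orbT.
by rewrite lerDr H // mem_head.
Qed.

Definition Tf (R : realFieldType) (k : nat) (f : 'I_k.+1 -> 'I_k.+1)
  (t : nat -> R) (m : nat) : R :=
  \sum_(1 <= n < k.+1 | in_range f n) t n * (if (m < n)%N then 1 / n%:R else 0).

Lemma term_mono (R : realFieldType) (t : nat -> R) m1 m2 n :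
  0 <= t n -> (m1 <= m2)%N ->
  t n * (if (m2 < n)%N then 1 / n%:R else 0) <= t n * (if (m1 < n)%N then 1 / n%:R else 0).
Proof.
move=> tn hm; case: ifP => h; first by rewrite (leq_ltn_trans hm h).
rewrite mulr0; case: ifP => _; last by rewrite mulr0.
by apply: mulr_ge0 => //; rewrite mul1r invr_ge0 ler0n.
Qed.

Lemma T_mono (R : realFieldType) k (f : 'I_k.+1 -> 'I_k.+1) (t : nat -> R) m1 m2 :
  (forall n, (1 <= n <= k)%N -> 0 <= t n) -> (m1 <= m2)%N -> Tf f t m2 <= Tf f t m1.
Proof.
move=> tnn hm; rewrite /Tf big_nat_cond [X in _ <= X]big_nat_cond.
apply: ler_sum => n /andP[/andP[h1 h2] _]; apply: term_mono hm.
by apply: tnn; rewrite h1 -ltnS.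
Qed.

Lemma T_strict (R : realFieldType) k (f : 'I_k.+1 -> 'I_k.+1) (t : nat -> R) m1 m2 i :
  (forall n, (1 <= n <= k)%N -> 0 <= t n) -> (1 <= i <= k)%N -> in_range f i ->
  0 < t i -> (m1 < i <= m2)%N -> Tf f t m2 < Tf f t m1.
Proof.
move=> tnn hi ir ti /andP[h1 h2]; rewrite -subr_gt0 /Tf !(big_mkcond (in_range f)) -sumrB.
apply: lt_le_trans; last first.
  apply: (@sum_ge_term _ _ _ i).
- by rewrite mem_index_iota ltnS.
- move=> y; rewrite mem_index_iota => /andP[y1 y2]; case: ifP => _; last by rewrite subrr.
  rewrite subr_ge0; apply: term_mono; last exact: ltnW (leq_trans h1 h2).
  by apply: tnn; rewrite y1 -ltnS.
rewrite ir h1 ltnNge h2 /= mulr0 subr0 mul1r; apply: mulr_gt0 => //.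
  rewrite invr_gt0 ltr0n; by case/andP: hi.
Qed.

Lemma T_const (R : realFieldType) k (f : 'I_k.+1 -> 'I_k.+1) (t : nat -> R) m1 m2 :
  (m1 <= m2)%N ->
  (forall n, (1 <= n <= k)%N -> in_range f n -> (m1 < n)%N -> (n <= m2)%N -> t n = 0) ->
  Tf f t m1 = Tf f t m2.
Proof.
move=> hm H; rewrite /Tf big_nat_cond [RHS]big_nat_cond.
apply: eq_bigr => n /andP[/andP[h1 h2] hr].
case: (ltnP m2 n) => h; first by rewrite (leq_ltn_trans hm h).
case: (ltnP m1 n) => h'; last by [].
by rewrite (H n) ?mul0r // h1 -ltnS.
Qed.

Lemma max_ge_term (R : realFieldType) (r : seq nat) (F : nat -> R) x :
  x \in r -> F x <= \big[Num.max/0]_(y <- r) F y.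
Proof.
elim: r => //= a r IH; rewrite in_cons big_cons => /orP[/eqP ->|xr].
  by rewrite le_max lexx.
by rewrite le_max (IH xr) orbT.
Qed.

Theorem lemma5p9 (R : realFieldType) (k : nat) (hk : (1 <= k)%N)
  (f : 'I_k.+1 -> 'I_k.+1) (hf : placing f)
  (t : nat -> R) (ht : in_box f t) :
  forall i : nat, (1 <= i <= k)%N ->
    (t i != 0 <-> exists r : R, #|[set j : 'I_k.+1 | r < phi f t j]| = i)
    /\
    (forall r : R, #|[set j : 'I_k.+1 | r < phi f t j]| = i ->
       let g := fun j : 'I_k.+1 =>
                  if phi f t j <= r then (inord i : 'I_k.+1) else ord0 in
       placing g
       /\ (forall l : nat, (1 <= l <= k)%N -> height g l = (l == i : nat))
       /\ placing_le g f).
Proof.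
move=> i hi.
have tnn : forall n, (1 <= n <= k)%N -> 0 <= t n.
  by move=> n hn; case/andP: (ht n hn).
have ik : (i < k.+1)%N by case/andP: hi.
case hz: (is_zero_vec k t).
  have tz : t i = 0.
    move: hz; rewrite /is_zero_vec => /allP /(_ i); rewrite mem_iota add1n.
    by move=> /(_ hi) /eqP.
  have card : forall r : R, #|[set j : 'I_k.+1 | r < phi f t j]| != i.
    move=> r.
    have -> : [set j : 'I_k.+1 | r < phi f t j] =
              if r < 1 / (k.+1)%:R then setT else set0.
      by apply/setP => j; rewrite !inE /phi hz /v0; case: ifP; rewrite inE.
    case: ifP => _; first by rewrite cardsT card_ord; apply/eqP => e; rewrite e ltnn in ik.
    by rewrite cards0; apply/eqP => e; rewrite -e in hi.
  split.
    by rewrite tz eqxx; split => // -[r /eqP]; rewrite (negbTE (card r)).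
  by move=> r /eqP; rewrite (negbTE (card r)).
move/negbT: hz; rewrite /is_zero_vec => /allPn [i0 hi0 ti0].
have hi0' : i0 \in index_iota 1 k.+1 by rewrite mem_index_iota; move: hi0; rewrite mem_iota add1n.
have hN : `|t i0| <= norm_inf k t by apply: max_ge_term.
have hM : `|t i0| <= norm_1 k t.
  by apply: sum_ge_term => // y _; apply: normr_ge0.
have t0 : 0 < `|t i0| by rewrite normr_gt0.
have hC : 0 < norm_inf k t / norm_1 k t.
  by apply: divr_gt0; apply: lt_le_trans t0 _.
have phiE : forall j, phi f t j = (1 - norm_inf k t) * (1 / (k.+1)%:R)
                                  + norm_inf k t / norm_1 k t * Tf f t (f j).
  by move=> j; rewrite /phi (negbTE _ : is_zero_vec k t = false) //; apply/allPn; exists i0.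
have phi_mono : forall a b, (f a <= f b)%N -> phi f t b <= phi f t a.
  move=> a b h; rewrite !phiE lerD2l ler_pM2l //.
  exact: T_mono.
have phi_strict : forall a b n, in_range f n -> (1 <= n <= k)%N -> t n != 0 ->
    (f a < n <= f b)%N -> phi f t b < phi f t a.
  move=> a b n hr hn tn hab; rewrite !phiE ltrD2l ltr_pM2l //.
  apply: (T_strict tnn hn hr) hab; by rewrite lt0r tn tnn.
have phi_eq : forall a b, (f a <= f b)%N ->
    (forall n, (1 <= n <= k)%N -> in_range f n -> (f a < n)%N -> (n <= f b)%N -> t n = 0) ->
    phi f t a = phi f t b.
  by move=> a b hab H; rewrite !phiE (T_const hab H).
have key : forall r : R, #|[set j : 'I_k.+1 | r < phi f t j]| = i ->
    exists b, (forall j, (r < phi f t j) = (f j < f b)%N) /\ nat_of_ord (f b) = i /\ t i != 0.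
  move=> r hU.
  set U := [set j : 'I_k.+1 | r < phi f t j] in hU.
  have [b0 hb0] : exists b0, b0 \notin U.
    apply/existsP; rewrite -negb_forall; apply/negP => /forallP hall.
    have : U = setT by apply/setP => j; rewrite in_setT hall.
    by move=> e; move: hU; rewrite e cardsT card_ord => e'; rewrite -e' ltnn in ik.
  case: (@arg_minnP _ b0 (fun j => j \notin U) (fun j => nat_of_ord (f j)) hb0) => b hb hmin.
  have down : forall j j', j \in U -> (f j' <= f j)%N -> j' \in U.
    move=> j j'; rewrite !inE => hj h; exact: lt_le_trans hj (phi_mono _ _ h).
  have Ueq : forall j, (r < phi f t j) = (f j < f b)%N.
    move=> j; apply/idP/idP => h.
      rewrite ltnNge; apply/negP => h'; move: hb; rewrite (down j b) //; by rewrite inE.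
    apply/negPn/negP => hj.
    have : (f b <= f j)%N by apply: hmin; rewrite inE.
    by rewrite leqNgt h.
  have hfb : nat_of_ord (f b) = i.
    rewrite -hU (hf b); apply: eq_card => j; by rewrite !inE Ueq.
  exists b; split => //; split => //.
  apply/negP => /eqP ti.
  have [a0 ha0] : exists a0, a0 \in U.
    by apply/set0Pn; rewrite -card_gt0 hU; case/andP: hi.
  case: (@arg_maxnP _ a0 (fun j => j \in U) (fun j => nat_of_ord (f j)) ha0) => a ha hmax.
  have hab : (f a < f b)%N by rewrite -Ueq; move: ha; rewrite inE.
  have : phi f t a = phi f t b.
    apply: phi_eq; first exact: ltnW.
    move=> n hn hr h1 h2.
    case: (ltngtP n (f b)) h2 => // [h3 _|-> _]; last by rewrite hfb.
    case/existsP: hr => c /eqP hc.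
    have : c \in U by rewrite inE Ueq hc.
    move/hmax; rewrite hc => h4.
    by move: (leq_trans h1 h4); rewrite ltnn.
  move: ha hb; rewrite !inE => ha hb e; rewrite e in ha.
  by rewrite ha in hb.
split.
  split.
    move=> ti.
    have ir : in_range f i.
      case: (boolP (in_range f i)) => // hn; move: (ht i hi); rewrite /height (negbTE hn) => /andP[h1 h2].
      by move: ti; rewrite (@le_anti _ _ (t i) 0) ?eqxx // h2 h1.
    case/existsP: (ir) => b /eqP hb.
    exists (phi f t b); rewrite -hb (hf b); apply: eq_card => j; rewrite !inE.
    case: (ltnP (f j) (f b)) => h.
      by apply: (phi_strict j b i) => //; rewrite -hb h leqnn.
    by rewrite ltNge phi_mono.
  by case=> r /key [b [_ [_ ?]]].
move=> r /key [b [Ueq [hfb _]]]; set g := (fun j : 'I_k.+1 => _).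
have gE : forall j, nat_of_ord (g j) = if phi f t j <= r then i else 0%N.
  by move=> j; rewrite /g; case: ifP => //; rewrite inordK.
have ipos : (0 < i)%N by case/andP: hi.
split.
  move=> j; rewrite gE; case: ifP => hj.
    rewrite -[in LHS]hfb (hf b); apply: eq_card => l; rewrite !inE gE leNgt Ueq.
    by case: (f l < f b)%N => /=; rewrite ?ipos ?ltnn.
  by apply/esym/eqP; rewrite cards_eq0; apply/eqP/setP => l; rewrite !inE ltn0.
split.
  move=> l hl; rewrite /height /in_range; case: (eqVneq l i) => [->|hne].
    have -> : [exists j, nat_of_ord (g j) == i].
      by apply/existsP; exists b; rewrite gE leNgt Ueq ltnn /=.
    by rewrite ?eqxx.
  have -> : [exists j, nat_of_ord (g j) == l] = false.
    apply/negbTE/existsPn => j; rewrite gE; case: ifP => _; first by rewrite eq_sym.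
    by rewrite eq_sym -lt0n; case/andP: hl.
  by [].
move=> j; rewrite gE; case: ifP => // hj.
by rewrite -hfb leqNgt -Ueq -leNgt.
Qed.
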